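(* Let $\sum_{n=1}^{\infty}x_n$ be a conditionally convergent series of reals and $I$ an ideal on $\mathbb{N}$ containing $\mathrm{Fin}$. Write $x^{+}=\max\{x,0\}$, $x^{-}=\max\{-x,0\}$. Then: (1) $SR_I(x_n)=\{\sum_{n=1}^{\infty}x_n\}$ if and only if $\sum_{n\in A}|x_n|<\infty$ for every $A\in I$; (2) if there exists $A\in I$ with $\sum_{n\in A}x_n^{+}=\sum_{n\in A}x_n^{-}=\infty$, then $SR_I(x_n)=\mathbb{R}$; (3) if there exists $A\in I$ with $\sum_{n\in A}x_n^{+}=\infty$, and every $A\in I$ with $\sum_{n\in A}x_n^{+}=\infty$ satisfies $\sum_{n\in A}x_n^{-}<\infty$, then $SR_I(x_n)\supseteq(-\infty,\sum_{n=1}^{\infty}x_n]$; (4) if there exists $B\in I$ with $\sum_{n\in B}x_n^{-}=\infty$, and every $B\in I$ with $\sum_{n\in B}x_n^{-}=\infty$ satisfies $\sum_{n\in B}x_n^{+}<\infty$, then $SR_I(x_n)\supseteq[\sum_{n=1}^{\infty}x_n,\infty)$. Moreover, for every conditionally convergent series exactly one of the four hypotheses (the condition in (1), and the hypotheses of (2), (3), (4)) holds.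
   Context: An ideal on $\mathbb{N}$ is a family $I\subseteq P(\mathbb{N})$ closed under finite unions and subsets with $\mathbb{N}\notin I$; $\mathrm{Fin}$ is the ideal of finite sets. $S_\infty$ is the set of permutations of $\mathbb{N}$, and for $\sigma\in S_\infty$, $\mathrm{supp}(\sigma)=\{n:\sigma(n)\neq n\}$. The ideally supported sum range is $SR_I(x_n)=\{\sum_{n=1}^{\infty}x_{\sigma(n)} : \sigma\in S_\infty,\ \mathrm{supp}(\sigma)\in I,\ \sum_{n}x_{\sigma(n)}\text{ converges}\}$. *)

(* Defs.v *)
From Stdlib Require Import Reals List.
Open Scope R_scope.

(* Subsets of N are predicates nat -> Prop (N is indexed from 0). *)
Definition subset_of (A B : nat -> Prop) : Prop := forall n, A n -> B n.

Definition finite_set (A : nat -> Prop) : Prop :=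
  exists N : nat, forall n, A n -> (n < N)%nat.

Definition is_ideal (I : (nat -> Prop) -> Prop) : Prop :=
  (forall A B, I A -> I B -> I (fun n => A n \/ B n)) /\
  (forall A B, I A -> subset_of B A -> I B) /\
  ~ I (fun _ => True).

Definition is_perm (s : nat -> nat) : Prop :=
  (forall m n, s m = s n -> m = n) /\ (forall m, exists n, s n = m).

Definition supp (s : nat -> nat) : nat -> Prop := fun n => s n <> n.

Definition SR (I : (nat -> Prop) -> Prop) (x : nat -> R) (r : R) : Prop :=
  exists s : nat -> nat, is_perm s /\ I (supp s) /\
    Un_cv (fun N => sum_f_R0 (fun n => x (s n)) N) r.

Definition lsum (l : list R) : R := fold_right Rplus 0 l.

(* For nonnegative f: sum_{n in A} f n < infinity, i.e. the sums of f over
   finite subsets of A are bounded. *)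
Definition sum_over_finite (A : nat -> Prop) (f : nat -> R) : Prop :=
  exists M : R, forall l : list nat, NoDup l -> (forall n, In n l -> A n) ->
    lsum (map f l) <= M.

Definition pos_part (x : R) : R := Rmax x 0.
Definition neg_part (x : R) : R := Rmax (- x) 0.

(* Main.v *)
Require Import Defs.
From Stdlib Require Import Reals List Lra Lia Permutation ClassicalEpsilon Classical Arith ZArith.
Open Scope R_scope.


Fixpoint sumN (h : nat -> R) (n : nat) : R :=
  match n with O => 0 | S n => sumN h n + h n end.

Lemma sum_f_R0_sumN h N : sum_f_R0 h N = sumN h (S N).
Proof. induction N; simpl in *; [lra|rewrite IHN; reflexivity]. Qed.

Lemma sumN_ext h h' n : (forall a, (a < n)%nat -> h a = h' a) -> sumN h n = sumN h' n.
Proof. induction n; intros H; simpl; [lra|]. rewrite IHn by (intros; apply H; lia). rewrite (H n) by lia; lra. Qed.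

Lemma sumN_plus h h' n : sumN (fun a => h a + h' a) n = sumN h n + sumN h' n.
Proof. induction n; simpl; lra. Qed.

Lemma sumN_minus h h' n : sumN (fun a => h a - h' a) n = sumN h n - sumN h' n.
Proof. induction n; simpl; lra. Qed.

Lemma sumN_le h h' n : (forall a, (a < n)%nat -> h a <= h' a) -> sumN h n <= sumN h' n.
Proof. induction n; intros H; simpl; [lra|]. specialize (IHn (fun a Ha => H a ltac:(lia))). specialize (H n ltac:(lia)). lra. Qed.

Lemma sumN_nonneg h n : (forall a, 0 <= h a) -> 0 <= sumN h n.
Proof. intros H; induction n; simpl; [lra|]. specialize (H n); lra. Qed.

Lemma sumN_abs h n : Rabs (sumN h n) <= sumN (fun a => Rabs (h a)) n.
Proof. induction n; simpl. rewrite Rabs_R0; lra. eapply Rle_trans; [apply Rabs_triang|lra]. Qed.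

Lemma sumN_mono h n m : (forall a, 0 <= h a) -> (n <= m)%nat -> sumN h n <= sumN h m.
Proof. intros H Hnm; induction Hnm; simpl; [lra|]. specialize (H m); lra. Qed.

Lemma sumN_zero h n : (forall a, (a < n)%nat -> h a = 0) -> sumN h n = 0.
Proof. intros H. rewrite (sumN_ext h (fun _ => 0)) by assumption. clear H. induction n; simpl; lra. Qed.

Lemma sumN_single h a0 n : (forall a, a <> a0 -> h a = 0) -> (a0 < n)%nat -> sumN h n = h a0.
Proof.
  intros H Ha. induction n; [lia|]. simpl. destruct (Nat.eq_dec a0 n) as [->|Hne].
  - rewrite sumN_zero; [lra|]. intros a Ha'. apply H; lia.
  - rewrite IHn by lia. rewrite (H n) by lia. lra.
Qed.

Lemma sumN_cut h k m : sumN (fun p => if Nat.ltb p k then h p else 0) m = sumN h (Nat.min m k).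
Proof.
  induction m. simpl; destruct k; reflexivity.
  cbn [sumN]. destruct (Nat.ltb_spec m k).
  - replace (Nat.min (S m) k) with (S (Nat.min m k)) by lia. cbn [sumN]. rewrite IHm.
    replace (Nat.min m k) with m by lia. reflexivity.
  - replace (Nat.min (S m) k) with (Nat.min m k) by lia. rewrite IHm; lra.
Qed.

Lemma lsum_app l1 l2 : lsum (l1 ++ l2) = lsum l1 + lsum l2.
Proof. induction l1; simpl; [lra|rewrite IHl1; lra]. Qed.

Lemma lsum_perm (f : nat -> R) (l l' : list nat) : Permutation l l' -> lsum (map f l) = lsum (map f l').
Proof. induction 1; simpl; lra. Qed.

Lemma lsum_map_plus (f g : nat -> R) (l : list nat) : lsum (map (fun a => f a + g a) l) = lsum (map f l) + lsum (map g l).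
Proof. induction l; simpl; lra. Qed.

Lemma lsum_map_le (f g : nat -> R) (l : list nat) : (forall a, In a l -> f a <= g a) -> lsum (map f l) <= lsum (map g l).
Proof. induction l; simpl; intros H; [lra|]. specialize (IHl (fun a Ha => H a (or_intror Ha))). specialize (H a (or_introl eq_refl)). lra. Qed.

Lemma lsum_nonneg (f : nat -> R) (l : list nat) : (forall a, 0 <= f a) -> 0 <= lsum (map f l).
Proof. intros H; induction l; simpl; [lra|]. specialize (H a); lra. Qed.

Lemma lsum_filter (f : nat -> R) (q : nat -> bool) (l : list nat) :
  lsum (map f l) = lsum (map f (filter q l)) + lsum (map f (filter (fun a => negb (q a)) l)).
Proof. induction l; simpl; [lra|]. destruct (q a); simpl; lra. Qed.

Lemma sumN_filter (f : nat -> R) (q : nat -> bool) m :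
  sumN (fun p => if q p then f p else 0) m = lsum (map f (filter q (seq 0 m))).
Proof.
  induction m; [reflexivity|]. cbn [sumN]. rewrite seq_S, filter_app, map_app, lsum_app, IHm. simpl.
  destruct (q m); simpl; lra.
Qed.

Lemma list_le_sumN (f : nat -> R) (q : nat -> bool) m l :
  (forall n, 0 <= f n) -> NoDup l -> (forall p, In p l -> q p = true /\ (p < m)%nat) ->
  lsum (map f l) <= sumN (fun p => if q p then f p else 0) m.
Proof.
  intros Hf. revert l. induction m; intros l Hnd Hl.
  - destruct l as [|p l]; simpl; [lra|]. destruct (Hl p (or_introl eq_refl)); lia.
  - simpl. destruct (in_dec Nat.eq_dec m l) as [Hin|Hnin].
    + destruct (in_split _ _ Hin) as [l1 [l2 ->]].
      rewrite (lsum_perm f _ (m :: l1 ++ l2)) by (symmetry; apply Permutation_middle).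
      simpl. pose proof (NoDup_remove_1 _ _ _ Hnd) as Hnd'. pose proof (NoDup_remove_2 _ _ _ Hnd) as Hm.
      assert (lsum (map f (l1 ++ l2)) <= sumN (fun p => if q p then f p else 0) m).
      { apply IHm; auto. intros p Hp. assert (In p (l1 ++ m :: l2)) by (apply in_app_or in Hp; apply in_or_app; simpl; tauto).
        destruct (Hl p H) as [H1 H2]. split; auto. assert (p <> m) by (intros ->; tauto). lia. }
      destruct (Hl m Hin) as [-> _]. lra.
    + assert (lsum (map f l) <= sumN (fun p => if q p then f p else 0) m).
      { apply IHm; auto. intros p Hp. destruct (Hl p Hp) as [H1 H2]. split; auto. assert (p <> m) by (intros ->; tauto). lia. }
      destruct (q m); [specialize (Hf m)|]; lra.
Qed.

Lemma list_bound (l : list nat) : exists m, forall p, In p l -> (p < m)%nat.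
Proof. induction l as [|a l [m Hm]]. exists O; simpl; tauto. exists (S (Nat.max a m)). intros p [->|Hp]; [lia|]. specialize (Hm p Hp); lia. Qed.

Definition dP (P : nat -> Prop) (n : nat) : bool := if excluded_middle_informative (P n) then true else false.
Lemma dP_spec P n : dP P n = true <-> P n.
Proof. unfold dP; destruct excluded_middle_informative; split; intros; congruence || tauto. Qed.
Definition indf (P : nat -> Prop) (f : nat -> R) p := if dP P p then f p else 0.

Lemma sof_sumN (A : nat -> Prop) f : (forall n, 0 <= f n) ->
  (sum_over_finite A f <-> exists M, forall m, sumN (indf A f) m <= M).
Proof.
  intros Hf; split.
  - intros [M HM]. exists M. intros m. unfold indf. rewrite sumN_filter. apply HM.
    apply NoDup_filter, seq_NoDup. intros n Hn. apply filter_In in Hn. apply dP_spec; tauto.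
  - intros [M HM]. exists M. intros l Hnd Hl. destruct (list_bound l) as [m Hm].
    eapply Rle_trans; [|apply (HM m)]. apply list_le_sumN; auto.
    intros p Hp; split; [apply dP_spec; auto|auto].
Qed.


Lemma sof_mono A B f : subset_of B A -> sum_over_finite A f -> sum_over_finite B f.
Proof. intros HBA [M HM]. exists M. intros l Hnd Hl. apply HM; auto. Qed.

Lemma sof_union A B f : (forall n, 0 <= f n) -> sum_over_finite A f -> sum_over_finite B f ->
  sum_over_finite (fun n => A n \/ B n) f.
Proof.
  intros Hf [M1 H1] [M2 H2]. exists (M1 + M2). intros l Hnd Hl.
  rewrite (lsum_filter f (dP A)).
  assert (lsum (map f (filter (dP A) l)) <= M1).
  { apply H1. apply NoDup_filter; auto. intros n Hn. apply filter_In in Hn. apply dP_spec; tauto. }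
  assert (lsum (map f (filter (fun a => negb (dP A a)) l)) <= M2).
  { apply H2. apply NoDup_filter; auto. intros n Hn. apply filter_In in Hn. destruct Hn as [Hn Hq].
    destruct (Hl n Hn) as [HA|HB]; auto. apply dP_spec in HA. rewrite HA in Hq; discriminate. }
  lra.
Qed.

Lemma abs_pos_neg r : Rabs r = pos_part r + neg_part r.
Proof. unfold pos_part, neg_part, Rmax, Rabs. repeat destruct Rle_dec; destruct Rcase_abs; lra. Qed.

Lemma pos_nonneg r : 0 <= pos_part r. Proof. unfold pos_part, Rmax; destruct Rle_dec; lra. Qed.
Lemma neg_nonneg r : 0 <= neg_part r. Proof. unfold neg_part, Rmax; destruct Rle_dec; lra. Qed.

Lemma sof_abs A x : sum_over_finite A (fun n => pos_part (x n)) -> sum_over_finite A (fun n => neg_part (x n)) ->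
  sum_over_finite A (fun n => Rabs (x n)).
Proof.
  intros [M1 H1] [M2 H2]. exists (M1+M2). intros l Hnd Hl.
  eapply Rle_trans; [apply (lsum_map_le _ (fun n => pos_part (x n) + neg_part (x n))); intros; rewrite abs_pos_neg; lra|].
  rewrite lsum_map_plus. specialize (H1 l Hnd Hl). specialize (H2 l Hnd Hl). lra.
Qed.

Lemma sof_le A f g : (forall n, f n <= g n) -> sum_over_finite A g -> sum_over_finite A f.
Proof. intros Hfg [M H]. exists M. intros l Hnd Hl. eapply Rle_trans; [|apply (H l Hnd Hl)]. apply lsum_map_le; auto. Qed.

Lemma sof_abs_pos A x : sum_over_finite A (fun n => Rabs (x n)) -> sum_over_finite A (fun n => pos_part (x n)).
Proof. apply sof_le. intros n. rewrite abs_pos_neg. pose proof (neg_nonneg (x n)). lra. Qed.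
Lemma sof_abs_neg A x : sum_over_finite A (fun n => Rabs (x n)) -> sum_over_finite A (fun n => neg_part (x n)).
Proof. apply sof_le. intros n. rewrite abs_pos_neg. pose proof (pos_nonneg (x n)). lra. Qed.

Definition win (h : nat -> R) k m := sumN (fun p => if Nat.leb k p then h p else 0) m.

Lemma mass_of_not_sof (A : nat -> Prop) (x : nat -> R) : ~ sum_over_finite A (fun n => pos_part (x n)) ->
  forall k M, exists m, M <= win (indf (fun n => A n /\ 0 < x n) x) k m.
Proof.
  intros Hn k M. apply NNPP. intros Hc. apply Hn.
  apply sof_sumN; [intros; apply pos_nonneg|].
  set (h := indf (fun n => A n /\ 0 < x n) x).
  assert (Hh : forall p, indf A (fun n => pos_part (x n)) p = h p).
  { intros p. unfold h, indf. destruct (dP A p) eqn:E1.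
    - apply dP_spec in E1. destruct (dP (fun n => A n /\ 0 < x n) p) eqn:E2.
      + apply dP_spec in E2. unfold pos_part, Rmax; destruct Rle_dec; lra.
      + assert (HnP : ~ (A p /\ 0 < x p)) by (intro HP; apply (proj2 (dP_spec (fun n => A n /\ 0 < x n) p)) in HP; congruence).
        unfold pos_part, Rmax; destruct Rle_dec; [lra|]. exfalso; apply HnP; split; auto; lra.
    - destruct (dP (fun n => A n /\ 0 < x n) p) eqn:E2; [|reflexivity]. apply dP_spec in E2.
      exfalso. destruct E2 as [HA _]. apply (proj2 (dP_spec A p)) in HA; congruence. }
  assert (Hh0 : forall p, 0 <= h p).
  { intros p; rewrite <- Hh. unfold indf; destruct dP; [apply pos_nonneg|lra]. }
  exists (sumN h k + M). intros m. rewrite (sumN_ext _ h) by auto.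
  rewrite (sumN_ext h (fun p => (if Nat.ltb p k then h p else 0) + (if Nat.leb k p then h p else 0))).
  2:{ intros a _. destruct (Nat.ltb_spec a k); destruct (Nat.leb_spec k a); try lia; lra. }
  rewrite sumN_plus, sumN_cut.
  assert (sumN h (Nat.min m k) <= sumN h k) by (apply sumN_mono; auto; lia).
  assert (win h k m < M).
  { destruct (Rlt_le_dec (win h k m) M); auto. exfalso; apply Hc. exists m; auto. }
  unfold win in *. lra.
Qed.

Local Open Scope bool_scope.

Definition c (a : nat) : R := / (INR a + 1) - / (INR a + 2).

Lemma c_pos a : 0 < c a.
Proof. unfold c. pose proof (pos_INR a). apply Rlt_0_minus. apply Rinv_lt_contravar; nra. Qed.

Lemma tele K0 K : sumN (fun a => if Nat.leb K0 a then c a else 0) K <= / (INR K0 + 1).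
Proof.
  assert (H : forall K, sumN (fun a => if Nat.leb K0 a then c a else 0) K =
     if Nat.leb K K0 then 0 else / (INR K0 + 1) - / (INR K + 1)).
  { clear K. intros K. induction K; [reflexivity|]. cbn [sumN]. rewrite IHK. unfold c.
    destruct (Nat.leb_spec K K0); destruct (Nat.leb_spec (S K) K0); destruct (Nat.leb_spec K0 K); try lia.
    - lra.
    - assert (K = K0) by lia. subst. rewrite S_INR. replace (INR K0 + 1 + 1) with (INR K0 + 2) by ring. lra.
    - rewrite S_INR. replace (INR K + 1 + 1) with (INR K + 2) by ring. lra. }
  rewrite H. pose proof (pos_INR K0). pose proof (pos_INR K).
  destruct (Nat.leb K K0). apply Rlt_le, Rinv_0_lt_compat; lra.
  assert (0 < / (INR K + 1)) by (apply Rinv_0_lt_compat; lra). lra.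
Qed.

Lemma cv_ext u v l : (forall n, u n = v n) -> Un_cv u l -> Un_cv v l.
Proof. intros H Hu eps He. destruct (Hu eps He) as [N HN]. exists N. intros n Hn. rewrite <- H. auto. Qed.

Lemma cv_shift u l : Un_cv u l -> Un_cv (fun n => u (S n)) l.
Proof. intros Hu eps He. destruct (Hu eps He) as [N HN]. exists N. intros n Hn. apply HN. lia. Qed.

Section Core.
Variable x : nat -> R.
Variable P : nat -> Prop.
Variable d : R.
Variable g : nat -> nat.
Hypothesis Hpos : forall n, P n -> 0 < x n.
Hypothesis Hd : 0 < d.
Hypothesis g1 : forall a, P (g a).
Hypothesis g2 : forall a, (a < g a)%nat.
Hypothesis g3 : forall a, (g a < g (S a))%nat.
Hypothesis g4 : forall a, Rabs (x (g a)) <= c a.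
Hypothesis g5 : forall a, d + 1 <= win (indf P x) (S (g a)) (g (S a)).
Hypothesis x0 : forall eps, 0 < eps -> exists N, forall n, (N <= n)%nat -> Rabs (x n) <= eps.

Lemma gmono a b : (a < b)%nat -> (g a < g b)%nat.
Proof. intros H; induction H; [apply g3|]. specialize (g3 m); lia. Qed.

Lemma ginj a b : g a = g b -> a = b.
Proof. intros H. destruct (Nat.lt_trichotomy a b) as [Hl|[Hl|Hl]]; auto; apply gmono in Hl; lia. Qed.

Lemma gmono_inv a b : (g a < g b)%nat -> (a < b)%nat.
Proof. intros H. destruct (Nat.lt_ge_cases a b); auto. destruct (Nat.eq_dec a b) as [->|]; [lia|].
  assert (g b < g a)%nat by (apply gmono; lia). lia. Qed.

Definition inB K := dP (fun K => exists a, g a = K) K.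
Definition osum (Fk : nat -> bool) K := sumN (fun a => if Fk a && Nat.leb K (g a) then x a else 0) K.
Definition dec K (Fk : nat -> bool) : bool :=
  dP P K && negb (inB K) && (if Rlt_dec (osum Fk K) d then true else false).
Fixpoint F (K : nat) : nat -> bool :=
  match K with O => fun _ => false | S K' => let b := dec K' (F K') in fun a => if Nat.eqb a K' then b else F K' a end.
Definition opb a := F (S a) a.
Definition o K := osum opb K.

Lemma F_spec K a : F K a = if Nat.ltb a K then opb a else false.
Proof.
  induction K; [simpl; destruct (Nat.ltb_spec a 0); [lia|reflexivity]|].
  cbn [F]. destruct (Nat.eqb_spec a K).
  - subst. unfold opb. simpl. rewrite Nat.eqb_refl. destruct (Nat.ltb_spec K (S K)); [reflexivity|lia].
  - rewrite IHK. destruct (Nat.ltb_spec a K); destruct (Nat.ltb_spec a (S K)); try lia; reflexivity.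
Qed.

Lemma opb_eq K : opb K = dec K opb.
Proof.
  unfold opb at 1. simpl. rewrite Nat.eqb_refl. unfold dec. f_equal. unfold osum.
  rewrite (sumN_ext _ (fun a => if opb a && Nat.leb K (g a) then x a else 0)); [reflexivity|].
  intros a Ha. rewrite F_spec. destruct (Nat.ltb_spec a K); [reflexivity|lia].
Qed.

Lemma dP_false (Q : nat -> Prop) n : dP Q n = false <-> ~ Q n.
Proof. rewrite <- Bool.not_true_iff_false, dP_spec. tauto. Qed.

Lemma opb_spec K : opb K = true <-> P K /\ ~ (exists a, g a = K) /\ o K < d.
Proof.
  rewrite opb_eq. unfold dec, inB. fold (o K).
  rewrite !Bool.andb_true_iff, Bool.negb_true_iff, dP_spec, dP_false.
  destruct (Rlt_dec (o K) d); split; intros H; try tauto; try discriminate. lra.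
Qed.

Lemma opb_P a : opb a = true -> P a.
Proof. intros H; apply opb_spec in H; tauto. Qed.
Lemma opb_notB a b : opb a = true -> g b <> a.
Proof. intros H He; apply opb_spec in H. destruct H as [_ [H _]]. apply H; eauto. Qed.

Definition W (h : nat -> R) K := sumN (fun a => if opb a && Nat.leb K (g a) then h a else 0) K.
Definition cl (h : nat -> R) K := sumN (fun a => if opb a && Nat.eqb (g a) K then h a else 0) K.

Lemma W_step h K : W h (S K) = W h K - cl h K + (if opb K then h K else 0).
Proof.
  unfold W, cl. cbn [sumN]. rewrite <- sumN_minus.
  replace (Nat.leb (S K) (g K)) with true by (symmetry; apply Nat.leb_le; apply g2).
  rewrite Bool.andb_true_r. f_equal. apply sumN_ext. intros a Ha.
  destruct (opb a); rewrite ?Bool.andb_true_l, ?Bool.andb_false_l; [|lra].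
  destruct (Nat.leb_spec (S K) (g a)); destruct (Nat.leb_spec K (g a)); destruct (Nat.eqb_spec (g a) K).
  all: try (exfalso; lia). all: lra.
Qed.

Lemma cl_none h K : ~ (exists a, g a = K) -> cl h K = 0.
Proof. intros H. unfold cl. apply sumN_zero. intros a _. destruct (Nat.eqb_spec (g a) K); [exfalso; eauto|].
  rewrite Bool.andb_false_r; reflexivity. Qed.

Lemma cl_some h K a0 : g a0 = K -> cl h K = if opb a0 then h a0 else 0.
Proof.
  intros H. unfold cl. rewrite (sumN_single _ a0).
  - rewrite H, Nat.eqb_refl, Bool.andb_true_r. reflexivity.
  - intros a Ha. destruct (Nat.eqb_spec (g a) K); [exfalso; apply Ha; apply ginj; congruence|].
    rewrite Bool.andb_false_r; reflexivity.
  - specialize (g2 a0); lia.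
Qed.

Definition ginv n : option nat :=
  match excluded_middle_informative (exists a, g a = n) with
  | left H => Some (proj1_sig (constructive_indefinite_description _ H))
  | right _ => None end.

Lemma ginv_some n a : ginv n = Some a -> g a = n.
Proof. unfold ginv. destruct excluded_middle_informative as [H|H]; [|discriminate].
  destruct constructive_indefinite_description; simpl. congruence. Qed.
Lemma ginv_none n : ginv n = None -> ~ exists a, g a = n.
Proof. unfold ginv. destruct excluded_middle_informative as [H|H]; [discriminate|auto]. Qed.
Lemma ginv_g a : ginv (g a) = Some a.
Proof. destruct (ginv (g a)) eqn:E. apply ginv_some in E. apply ginj in E. subst; auto.
  apply ginv_none in E. exfalso; eauto. Qed.

Definition fperm n := if opb n then g n else match ginv n with Some a => if opb a then a else n | None => n end.

Lemma f_invol n : fperm (fperm n) = n.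
Proof.
  unfold fperm at 2. destruct (opb n) eqn:E.
  - unfold fperm. destruct (opb (g n)) eqn:E2. { exfalso. eapply opb_notB; eauto. }
    rewrite ginv_g, E. reflexivity.
  - destruct (ginv n) eqn:E2.
    + destruct (opb n0) eqn:E3.
      * apply ginv_some in E2. unfold fperm. rewrite E3. auto.
      * unfold fperm. rewrite E, E2, E3. reflexivity.
    + unfold fperm. rewrite E, E2. reflexivity.
Qed.

Lemma f_supp n : fperm n <> n -> P n.
Proof.
  unfold fperm. destruct (opb n) eqn:E. { intros _; apply opb_P; auto. }
  destruct (ginv n) eqn:E2; [|tauto]. destruct (opb n0); [|tauto]. intros _. apply ginv_some in E2. subst. apply g1.
Qed.

Lemma f_perm : is_perm fperm.
Proof. split. - intros m n H. rewrite <- (f_invol m), <- (f_invol n), H. reflexivity.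
  - intros m. exists (fperm m). apply f_invol. Qed.

Lemma sum_identity K : sumN (fun n => x (fperm n)) K = sumN x K + W (fun a => x (g a)) K - W x K.
Proof.
  induction K. { unfold W; simpl; lra. }
  cbn [sumN]. rewrite IHK, !W_step.
  destruct (opb K) eqn:E.
  - assert (HnB : ~ exists a, g a = K) by (intros [a Ha]; eapply opb_notB; eauto).
    rewrite !cl_none by auto. unfold fperm. rewrite E. lra.
  - destruct (ginv K) eqn:E2.
    + pose proof (ginv_some _ _ E2) as Hg. rewrite !(cl_some _ K n) by auto.
      unfold fperm. rewrite E, E2. destruct (opb n); subst; lra.
    + pose proof (ginv_none _ E2). rewrite !cl_none by auto. unfold fperm. rewrite E, E2. lra.
Qed.

Lemma o_W K : o K = W x K.
Proof. reflexivity. Qed.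

Lemma o_step K : o (S K) = o K - cl x K + (if opb K then x K else 0).
Proof. rewrite !o_W. apply W_step. Qed.

Lemma o_nonneg K : 0 <= o K.
Proof. rewrite o_W. unfold W. apply sumN_nonneg. intros a. destruct (opb a) eqn:E; simpl; [|lra].
  destruct (Nat.leb _ _); [apply Rlt_le, Hpos, opb_P; auto|lra]. Qed.

Lemma cl_nonneg K : 0 <= cl x K.
Proof. unfold cl. apply sumN_nonneg. intros a. destruct (opb a) eqn:E; simpl; [|lra].
  destruct (Nat.eqb _ _); [apply Rlt_le, Hpos, opb_P; auto|lra]. Qed.

Lemma upper_aux eps K0 : (forall n, (K0 <= n)%nat -> Rabs (x n) <= eps) ->
  forall m, o (K0 + m) <= d + eps \/ (forall a, (K0 <= a < K0 + m)%nat -> opb a = false).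
Proof.
  intros Heps m. induction m.
  - right. intros a Ha; lia.
  - replace (K0 + S m)%nat with (S (K0 + m)) by lia. rewrite o_step.
    pose proof (cl_nonneg (K0 + m)).
    destruct (opb (K0 + m)) eqn:E.
    + left. apply opb_spec in E. destruct E as [_ [_ E]]. specialize (Heps (K0 + m)%nat ltac:(lia)).
      pose proof (Rle_abs (x (K0 + m)%nat)). lra.
    + destruct IHm as [IH|IH]; [left; lra|]. right. intros a Ha.
      destruct (Nat.eq_dec a (K0 + m)); [subst; auto|]. apply IH; lia.
Qed.

Lemma upper eps : 0 < eps -> exists N, forall K, (N <= K)%nat -> o K <= d + eps.
Proof.
  intros He. destruct (x0 eps He) as [K0 HK0]. exists (Nat.max K0 (g K0)). intros K HK.
  destruct (upper_aux eps K0 HK0 (K - K0)) as [H|H]; replace (K0 + (K - K0))%nat with K in H by lia; auto.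
  assert (o K = 0).
  { rewrite o_W. unfold W. apply sumN_zero. intros a Ha. destruct (Nat.lt_ge_cases a K0).
    - assert (g a < g K0)%nat by (apply gmono; auto).
      destruct (Nat.leb_spec K (g a)); [lia|]. rewrite Bool.andb_false_r; reflexivity.
    - rewrite H by lia. reflexivity. }
  lra.
Qed.

Lemma indf_nonneg p : 0 <= indf P x p.
Proof. unfold indf. destruct (dP P p) eqn:E; [apply dP_spec in E; apply Rlt_le, Hpos; auto|lra]. Qed.

Lemma win_nonneg k m : 0 <= win (indf P x) k m.
Proof. unfold win. apply sumN_nonneg. intros a. destruct (Nat.leb _ _); [apply indf_nonneg|lra]. Qed.

Lemma lowerQ L m : (forall K, (L <= K < L + m)%nat -> ~ exists a, g a = K) ->
  Rmin d (o L + win (indf P x) L (L + m)) <= o (L + m).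
Proof.
  induction m; intros HB.
  - replace (L + 0)%nat with L. unfold win. rewrite sumN_zero.
    + unfold Rmin; destruct Rle_dec; lra.
    + intros a Ha. destruct (Nat.leb_spec L a); [lia|reflexivity].
    + lia.
  - specialize (IHm (fun K HK => HB K ltac:(lia))).
    replace (L + S m)%nat with (S (L + m)) by lia. rewrite o_step.
    rewrite cl_none by (apply HB; lia).
    unfold win in *. cbn [sumN]. replace (Nat.leb L (L + m)) with true by (symmetry; apply Nat.leb_le; lia).
    set (K := (L + m)%nat) in *.
    unfold indf at 2. destruct (dP P K) eqn:EP.
    + destruct (Rlt_dec (o K) d).
      * assert (opb K = true). { apply opb_spec. split; [apply dP_spec; auto|]. split; auto. apply HB; lia. }
        rewrite H. revert IHm. unfold Rmin. destruct Rle_dec; destruct Rle_dec; intros; lra.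
      * assert (opb K = false). { destruct (opb K) eqn:E; auto. apply opb_spec in E. lra. }
        rewrite H. pose proof (Rmin_l d (o L + (sumN (fun p : nat => if L <=? p then indf P x p else 0) K + x K))). lra.
    + assert (opb K = false). { destruct (opb K) eqn:E; auto. apply opb_P in E. apply dP_spec in E. congruence. }
      rewrite H. rewrite Rplus_0_r, Rplus_0_r. lra.
Qed.

Lemma noB_between a K : (S (g a) <= K < g (S a))%nat -> ~ exists b, g b = K.
Proof.
  intros HK [b Hb]. subst. destruct (Nat.lt_ge_cases b (S a)).
  - assert (b <= a)%nat by lia. destruct (Nat.eq_dec b a); [subst; lia|]. assert (g b < g a)%nat by (apply gmono; lia). lia.
  - destruct (Nat.eq_dec b (S a)); [subst; lia|]. assert (g (S a) < g b)%nat by (apply gmono; lia). lia.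
Qed.

Lemma o_at_g a : d <= o (g (S a)).
Proof.
  pose proof (lowerQ (S (g a)) (g (S a) - S (g a))) as H.
  replace (S (g a) + (g (S a) - S (g a)))%nat with (g (S a)) in H by (specialize (g3 a); lia).
  eapply Rle_trans; [|apply H].
  - pose proof (g5 a). pose proof (o_nonneg (S (g a))). unfold Rmin. destruct Rle_dec; lra.
  - intros K HK. apply (noB_between a). lia.
Qed.

Lemma o_after_g a : d - Rabs (x (S a)) <= o (S (g (S a))).
Proof.
  rewrite o_step. rewrite (cl_some x _ (S a)) by reflexivity.
  assert (opb (g (S a)) = false). { destruct (opb (g (S a))) eqn:E; auto. exfalso; eapply opb_notB; eauto. }
  rewrite H. pose proof (o_at_g a). pose proof (Rle_abs (x (S a))). pose proof (Rabs_pos (x (S a))).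
  destruct (opb (S a)); lra.
Qed.

Lemma locate K : (S (g 1) <= K)%nat -> exists a, (1 <= a)%nat /\ (S (g a) <= K <= g (S a))%nat.
Proof.
  intros HK. induction HK.
  - exists 1%nat. specialize (g3 1). lia.
  - destruct IHHK as [a [Ha1 Ha2]]. destruct (Nat.eq_dec m (g (S a))).
    + exists (S a). specialize (g3 (S a)). lia.
    + exists a. lia.
Qed.

Lemma lower eps : 0 < eps -> exists N, forall K, (N <= K)%nat -> d - eps <= o K.
Proof.
  intros He. destruct (x0 eps He) as [K0 HK0]. exists (S (g (S K0))). intros K HK.
  assert (HK1 : (S (g 1) <= K)%nat). { assert (g 1 <= g (S K0))%nat. { destruct K0; [lia|]. apply Nat.lt_le_incl, gmono; lia. } lia. }
  destruct (locate K HK1) as [a [Ha1 Ha2]].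
  assert (Ha : (K0 <= a)%nat). { assert (g (S K0) < g (S a))%nat by lia. apply gmono_inv in H. lia. }
  destruct a as [|a]; [lia|].
  pose proof (lowerQ (S (g (S a))) (K - S (g (S a)))) as H.
  replace (S (g (S a)) + (K - S (g (S a))))%nat with K in H by lia.
  assert (Hn : forall K', (S (g (S a)) <= K' < K)%nat -> ~ exists b, g b = K').
  { intros K' HK'. apply (noB_between (S a)). lia. }
  specialize (H Hn). pose proof (o_after_g a). pose proof (win_nonneg (S (g (S a))) K).
  specialize (HK0 (S a) ltac:(lia)).
  assert (d - eps <= Rmin d (o (S (g (S a))) + win (indf P x) (S (g (S a))) K)).
  { unfold Rmin. destruct Rle_dec; lra. }
  lra.
Qed.

Lemma o_cv : Un_cv o d.
Proof.
  intros eps He. destruct (upper (eps/2) ltac:(lra)) as [N1 H1]. destruct (lower (eps/2) ltac:(lra)) as [N2 H2].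
  exists (Nat.max N1 N2). intros n Hn. unfold R_dist. specialize (H1 n ltac:(lia)). specialize (H2 n ltac:(lia)).
  apply Rabs_def1; lra.
Qed.

Lemma WB_cv : Un_cv (W (fun a => x (g a))) 0.
Proof.
  intros eps He. destruct (archimed (/ eps)) as [Hup _].
  assert (0 < / eps) by (apply Rinv_0_lt_compat; auto).
  assert (Hz : (0 <= up (/ eps))%Z) by (apply le_IZR; lra).
  set (K0 := Z.to_nat (up (/ eps))).
  assert (HK0 : / eps < INR K0 + 1). { unfold K0. rewrite INR_IZR_INZ, Z2Nat.id by auto. lra. }
  exists (g K0). intros K HK. unfold R_dist. rewrite Rminus_0_r.
  eapply Rle_lt_trans; [apply sumN_abs|].
  eapply Rle_lt_trans; [apply (sumN_le _ (fun a => if Nat.leb K0 a then c a else 0))|].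
  - intros a Ha. destruct (opb a && Nat.leb K (g a)) eqn:E.
    + apply Bool.andb_true_iff in E. destruct E as [_ E]. apply Nat.leb_le in E.
      destruct (Nat.leb_spec K0 a). apply g4. assert (g a < g K0)%nat by (apply gmono; auto). lia.
    + rewrite Rabs_R0. destruct (Nat.leb K0 a); [apply Rlt_le, c_pos|lra].
  - eapply Rle_lt_trans; [apply tele|]. pose proof (pos_INR K0).
    rewrite <- (Rinv_inv eps). apply Rinv_lt_contravar; [|auto]. apply Rmult_lt_0_compat; lra.
Qed.

Lemma core_sec S0 : Un_cv (fun N => sum_f_R0 x N) S0 ->
  Un_cv (fun N => sum_f_R0 (fun n => x (fperm n)) N) (S0 - d).
Proof.
  intros Hc.
  apply (cv_ext (fun N => sumN x (S N) + W (fun a => x (g a)) (S N) - o (S N))).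
  { intros N. rewrite sum_f_R0_sumN, sum_identity. reflexivity. }
  replace (S0 - d) with (S0 + 0 - d) by ring.
  apply CV_minus; [apply CV_plus|].
  - apply (cv_ext (fun N => sum_f_R0 x N)); auto. intros; apply sum_f_R0_sumN.
  - apply cv_shift, WB_cv.
  - apply cv_shift, o_cv.
Qed.

End Core.


Lemma x_to_0 (x : nat -> R) S0 : Un_cv (fun N => sum_f_R0 x N) S0 ->
  forall eps, 0 < eps -> exists N, forall n, (N <= n)%nat -> Rabs (x n) <= eps.
Proof.
  intros Hc eps He. destruct (Hc (eps/2) ltac:(lra)) as [N HN]. exists (S N). intros n Hn.
  destruct n as [|m]; [lia|]. pose proof (HN (S m) ltac:(lia)) as H1. pose proof (HN m ltac:(lia)) as H2.
  unfold R_dist in *. simpl in H1. 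
  replace (x (S m)) with ((sum_f_R0 x m + x (S m) - S0) - (sum_f_R0 x m - S0)) by ring.
  eapply Rle_trans; [apply Rabs_triang|]. rewrite Rabs_Ropp. lra.
Qed.

Lemma cv_opp u l : Un_cv u l -> Un_cv (fun n => - u n) (- l).
Proof. intros H eps He. destruct (H eps He) as [N HN]. exists N. intros n Hn. unfold R_dist in *.
  replace (- u n - - l) with (- (u n - l)) by ring. rewrite Rabs_Ropp. auto. Qed.

Lemma sum_opp (x : nat -> R) N : sum_f_R0 (fun n => - x n) N = - sum_f_R0 x N.
Proof. induction N; simpl; [ring|rewrite IHN; ring]. Qed.

Section G.
Variable x : nat -> R.
Variable P : nat -> Prop.
Variable d : R.
Hypothesis Hpos : forall n, P n -> 0 < x n.
Hypothesis Hmass : forall k M, exists m, M <= win (indf P x) k m.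
Hypothesis x0 : forall eps, 0 < eps -> exists N, forall n, (N <= n)%nat -> Rabs (x n) <= eps.

Lemma unbounded k : exists p, (k <= p)%nat /\ P p.
Proof.
  apply NNPP. intros Hn. destruct (Hmass k 1) as [m Hm].
  assert (win (indf P x) k m = 0).
  { unfold win. apply sumN_zero. intros a _. destruct (Nat.leb_spec k a); [|reflexivity].
    unfold indf. destruct (dP P a) eqn:E; [|reflexivity]. apply dP_spec in E. exfalso; eauto. }
  lra.
Qed.

Lemma next_ex k a : exists m, P m /\ (k < m)%nat /\ (a < m)%nat /\ Rabs (x m) <= c a /\
  d + 1 <= win (indf P x) (S k) m.
Proof.
  destruct (Hmass (S k) (d + 1)) as [m1 Hm1]. destruct (x0 (c a) (c_pos a)) as [N HN].
  destruct (unbounded (Nat.max (Nat.max m1 N) (S (Nat.max k a)))) as [p [Hp1 Hp2]].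
  exists p. repeat split; auto; try lia. apply HN; lia.
  eapply Rle_trans; [apply Hm1|]. unfold win. apply sumN_mono; [|lia].
  intros b. destruct (Nat.leb _ _); [|lra]. unfold indf. destruct (dP P b) eqn:E; [apply dP_spec in E; apply Rlt_le; auto|lra].
Qed.

Definition gnext k a := proj1_sig (constructive_indefinite_description _ (next_ex k a)).
Lemma gnext_spec k a : P (gnext k a) /\ (k < gnext k a)%nat /\ (a < gnext k a)%nat /\ Rabs (x (gnext k a)) <= c a /\
  d + 1 <= win (indf P x) (S k) (gnext k a).
Proof. unfold gnext. destruct constructive_indefinite_description; simpl; auto. Qed.

Fixpoint gfun a := match a with O => gnext 0 0 | S a' => gnext (gfun a') (S a') end.

Lemma gfun_spec : (forall a, P (gfun a)) /\ (forall a, (a < gfun a)%nat) /\ (forall a, (gfun a < gfun (S a))%nat) /\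
  (forall a, Rabs (x (gfun a)) <= c a) /\ (forall a, d + 1 <= win (indf P x) (S (gfun a)) (gfun (S a))).
Proof.
  repeat split; intros a; destruct a; simpl; apply gnext_spec.
Qed.
End G.

Lemma core (x : nat -> R) (P : nat -> Prop) S0 d :
  Un_cv (fun N => sum_f_R0 x N) S0 -> (forall n, P n -> 0 < x n) ->
  (forall k M, exists m, M <= win (indf P x) k m) -> 0 <= d ->
  exists s, is_perm s /\ (forall n, supp s n -> P n) /\ Un_cv (fun N => sum_f_R0 (fun n => x (s n)) N) (S0 - d).
Proof.
  intros Hc Hpos Hmass Hd. destruct (Rle_lt_or_eq_dec 0 d Hd) as [Hd'|<-].
  - pose proof (x_to_0 x S0 Hc) as x0.
    destruct (gfun_spec x P d Hpos Hmass x0) as [g1 [g2 [g3 [g4 g5]]]].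
    set (g := gfun x P d Hpos Hmass x0) in *.
    exists (fperm x P d g). split; [apply f_perm; auto|]. split.
    + intros n Hn. apply (f_supp x P d g); auto.
    + apply core_sec; auto.
  - exists (fun n => n). split; [split; [auto|intros m; exists m; auto]|]. split.
    + intros n Hn; unfold supp in Hn; tauto.
    + replace (S0 - 0) with S0 by ring. auto.
Qed.

Lemma core_neg (x : nat -> R) (P : nat -> Prop) S0 d :
  Un_cv (fun N => sum_f_R0 x N) S0 -> (forall n, P n -> 0 < - x n) ->
  (forall k M, exists m, M <= win (indf P (fun n => - x n)) k m) -> 0 <= d ->
  exists s, is_perm s /\ (forall n, supp s n -> P n) /\ Un_cv (fun N => sum_f_R0 (fun n => x (s n)) N) (S0 + d).
Proof.
  intros Hc Hpos Hmass Hd.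
  destruct (core (fun n => - x n) P (- S0) d) as [s [H1 [H2 H3]]]; auto.
  { apply (cv_ext (fun N => - sum_f_R0 x N)). intros; rewrite sum_opp; auto. apply cv_opp; auto. }
  exists s. split; auto. split; auto.
  replace (S0 + d) with (- (- S0 - d)) by ring.
  apply (cv_ext (fun N => - sum_f_R0 (fun n => - x (s n)) N)).
  { intros; rewrite sum_opp; ring. }
  apply cv_opp; auto.
Qed.


Lemma NoDup_map_inj (s : nat -> nat) l : (forall a b, s a = s b -> a = b) -> NoDup l -> NoDup (map s l).
Proof. intros Hs; induction 1; simpl; constructor; auto. intros Hin. apply in_map_iff in Hin.
  destruct Hin as [y [Hy Hy']]. apply Hs in Hy. subst; auto. Qed.

Lemma lsum_abs (z : nat -> R) l : Rabs (lsum (map z l)) <= lsum (map (fun n => Rabs (z n)) l).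
Proof. induction l; simpl. rewrite Rabs_R0; lra. eapply Rle_trans; [apply Rabs_triang|lra]. Qed.

Lemma sumN_seq (h : nat -> R) K : sumN h K = lsum (map h (seq 0 K)).
Proof. induction K; [reflexivity|]. cbn [sumN]. rewrite seq_S, map_app, lsum_app, IHK. simpl. ring. Qed.

Lemma preimages (s : nat -> nat) : is_perm s -> forall K1, exists N0, forall j, (j < K1)%nat -> exists n, (n < N0)%nat /\ s n = j.
Proof.
  intros [_ Hsur] K1. induction K1. { exists O; intros; lia. }
  destruct IHK1 as [N0 HN0]. destruct (Hsur K1) as [nj Hnj]. exists (Nat.max N0 (S nj)).
  intros j Hj. destruct (Nat.eq_dec j K1) as [->|]. { exists nj; split; auto; lia. }
  destruct (HN0 j ltac:(lia)) as [n0 [Hn1 Hn2]]. exists n0; split; auto; lia.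
Qed.

Lemma tail_small (z : nat -> R) M : (forall m, sumN (fun n => Rabs (z n)) m <= M) ->
  forall eps, 0 < eps -> exists K1, forall l, NoDup l -> (forall p, In p l -> (K1 <= p)%nat) ->
    lsum (map (fun n => Rabs (z n)) l) < eps.
Proof.
  intros HM eps He. set (U := fun m => sumN (fun n => Rabs (z n)) m).
  assert (Hg : Un_growing U). { intros n. unfold U. simpl. pose proof (Rabs_pos (z n)). lra. }
  assert (Hb : has_ub U). { exists M. intros r [i ->]. apply HM. }
  destruct (growing_cv U Hg Hb) as [L HL].
  destruct (HL eps He) as [K1 HK1]. exists K1. intros l Hnd Hl.
  destruct (list_bound l) as [m Hm].
  assert (HUK : L - U K1 < eps). { specialize (HK1 K1 (le_n _)). unfold R_dist in HK1. apply Rabs_def2 in HK1. lra. }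
  assert (HUm : U (Nat.max m K1) <= L) by (apply growing_ineq; auto).
  eapply Rle_lt_trans.
  - apply (list_le_sumN _ (fun p => Nat.leb K1 p) (Nat.max m K1)); auto. intros; apply Rabs_pos.
    intros p Hp. split; [apply Nat.leb_le; auto|]. specialize (Hm p Hp); lia.
  - assert (Hsplit : U (Nat.max m K1) = sumN (fun p => if Nat.ltb p K1 then Rabs (z p) else 0) (Nat.max m K1)
       + sumN (fun p => if Nat.leb K1 p then Rabs (z p) else 0) (Nat.max m K1)).
    { unfold U. rewrite <- sumN_plus. apply sumN_ext. intros a _. destruct (Nat.ltb_spec a K1); destruct (Nat.leb_spec K1 a); try lia; lra. }
    rewrite sumN_cut in Hsplit. replace (Nat.min (Nat.max m K1) K1) with K1 in Hsplit by lia.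
    fold (U K1) in Hsplit. lra.
Qed.

Lemma rearr_abs_z (z : nat -> R) M (s : nat -> nat) : is_perm s -> (forall m, sumN (fun n => Rabs (z n)) m <= M) ->
  Un_cv (fun K => sumN (fun n => z (s n)) K - sumN z K) 0.
Proof.
  intros Hs HM eps He. destruct (tail_small z M HM (eps/2) ltac:(lra)) as [K1 HK1].
  destruct (preimages s Hs K1) as [N0 HN0]. exists (Nat.max N0 K1). intros K HK. unfold R_dist. rewrite Rminus_0_r.
  assert (Hinj := proj1 Hs).
  set (q1 := fun n => Nat.ltb (s n) K1). set (q0 := fun n => Nat.ltb n K1).
  assert (E1 : sumN (fun n => z (s n)) K = lsum (map z (map s (filter q1 (seq 0 K))))
                + lsum (map z (map s (filter (fun n => negb (q1 n)) (seq 0 K))))).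
  { rewrite !map_map. rewrite <- lsum_filter. apply sumN_seq. }
  assert (E2 : sumN z K = lsum (map z (filter q0 (seq 0 K))) + lsum (map z (filter (fun n => negb (q0 n)) (seq 0 K)))).
  { rewrite <- lsum_filter. apply sumN_seq. }
  assert (E3 : lsum (map z (map s (filter q1 (seq 0 K)))) = lsum (map z (filter q0 (seq 0 K)))).
  { apply lsum_perm. apply NoDup_Permutation.
    - apply NoDup_map_inj; auto. apply NoDup_filter, seq_NoDup.
    - apply NoDup_filter, seq_NoDup.
    - intros j. rewrite in_map_iff, filter_In, in_seq. unfold q0, q1. split.
      + intros [n [Hn1 Hn2]]. apply filter_In in Hn2. destruct Hn2 as [Hn2 Hn3]. apply Nat.ltb_lt in Hn3.
        subst. split; [lia|]. apply Nat.ltb_lt; auto.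
      + intros [Hj1 Hj2]. apply Nat.ltb_lt in Hj2. destruct (HN0 j Hj2) as [n [Hn1 Hn2]]. exists n. split; auto.
        apply filter_In. split; [apply in_seq; lia|]. apply Nat.ltb_lt. congruence. }
  assert (B1 : lsum (map (fun n => Rabs (z n)) (map s (filter (fun n => negb (q1 n)) (seq 0 K)))) < eps/2).
  { apply HK1. apply NoDup_map_inj; auto. apply NoDup_filter, seq_NoDup.
    intros p Hp. apply in_map_iff in Hp. destruct Hp as [n [<- Hn]]. apply filter_In in Hn. destruct Hn as [_ Hn].
    unfold q1 in Hn. destruct (Nat.ltb_spec (s n) K1); simpl in Hn; [discriminate|lia]. }
  assert (B2 : lsum (map (fun n => Rabs (z n)) (filter (fun n => negb (q0 n)) (seq 0 K))) < eps/2).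
  { apply HK1. apply NoDup_filter, seq_NoDup.
    intros p Hp. apply filter_In in Hp. destruct Hp as [_ Hn].
    unfold q0 in Hn. destruct (Nat.ltb_spec p K1); simpl in Hn; [discriminate|lia]. }
  pose proof (lsum_abs z (map s (filter (fun n => negb (q1 n)) (seq 0 K)))).
  pose proof (lsum_abs z (filter (fun n => negb (q0 n)) (seq 0 K))).
  rewrite E1, E2, E3.
  match goal with |- Rabs ?e < _ => replace e with (lsum (map z (map s (filter (fun n => negb (q1 n)) (seq 0 K)))) - lsum (map z (filter (fun n => negb (q0 n)) (seq 0 K)))) by ring end.
  eapply Rle_lt_trans; [apply Rabs_triang|]. rewrite Rabs_Ropp. lra.
Qed.


Lemma rearr_abs (x : nat -> R) S0 (s : nat -> nat) (A : nat -> Prop) : is_perm s -> (forall n, supp s n -> A n) ->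
  sum_over_finite A (fun n => Rabs (x n)) -> Un_cv (fun N => sum_f_R0 x N) S0 ->
  Un_cv (fun N => sum_f_R0 (fun n => x (s n)) N) S0.
Proof.
  intros Hs Hsupp Hsof Hc. set (z := indf A x).
  apply sof_sumN in Hsof; [|intros; apply Rabs_pos]. destruct Hsof as [M HM].
  assert (HM' : forall m, sumN (fun n => Rabs (z n)) m <= M).
  { intros m. rewrite (sumN_ext _ (indf A (fun n => Rabs (x n)))); auto. intros a _. unfold z, indf.
    destruct (dP A a); auto. apply Rabs_R0. }
  assert (Hpt : forall n, x (s n) = (x n - z n) + z (s n)).
  { intros n. destruct (Nat.eq_dec (s n) n) as [->|Hne]. ring.
    assert (HA1 : A n) by (apply Hsupp; auto).
    assert (HA2 : A (s n)). { apply Hsupp. intros He. apply (proj1 Hs) in He. auto. }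
    unfold z, indf. apply (proj2 (dP_spec A n)) in HA1. apply (proj2 (dP_spec A (s n))) in HA2.
    rewrite HA1, HA2. ring. }
  apply (cv_ext (fun N => sumN x (S N) + (sumN (fun n => z (s n)) (S N) - sumN z (S N)))).
  { intros N. rewrite sum_f_R0_sumN. rewrite (sumN_ext (fun n => x (s n)) (fun n => (x n - z n) + z (s n))) by (intros; apply Hpt).
    rewrite sumN_plus, sumN_minus; try ring. }
  replace S0 with (S0 + 0) by ring. apply CV_plus.
  - apply (cv_ext (fun N => sum_f_R0 x N)); auto. intros; apply sum_f_R0_sumN.
  - apply (cv_shift (fun K => sumN (fun n => z (s n)) K - sumN z K)). apply (rearr_abs_z z M s); auto.
Qed.

Section Main.
Variable x : nat -> R.
Variable S0 : R.
Variable I : (nat -> Prop) -> Prop.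
Hypothesis hI : is_ideal I.
Hypothesis hFin : forall A, finite_set A -> I A.
Hypothesis hconv : Un_cv (fun N => sum_f_R0 x N) S0.

Lemma SR_S : SR I x S0.
Proof. exists (fun n => n). split; [split; [auto|intros m; exists m; auto]|]. split; auto.
  apply hFin. exists O. intros n Hn. unfold supp in Hn. tauto. Qed.

Lemma SR_pos A : I A -> ~ sum_over_finite A (fun n => pos_part (x n)) -> forall r, r <= S0 -> SR I x r.
Proof.
  intros HA Hn r Hr. destruct (core x (fun n => A n /\ 0 < x n) S0 (S0 - r)) as [s [H1 [H2 H3]]]; auto.
  - intros n [_ Hn']; auto.
  - apply mass_of_not_sof; auto.
  - lra.
  - exists s. split; auto. split.
    + destruct hI as [_ [Hsub _]]. apply (Hsub A); auto. intros n Hsn. apply H2; auto.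
    + replace r with (S0 - (S0 - r)) by ring. auto.
Qed.

Lemma SR_neg A : I A -> ~ sum_over_finite A (fun n => neg_part (x n)) -> forall r, S0 <= r -> SR I x r.
Proof.
  intros HA Hn r Hr. destruct (core_neg x (fun n => A n /\ 0 < - x n) S0 (r - S0)) as [s [H1 [H2 H3]]]; auto.
  - intros n [_ Hn']; auto.
  - apply (mass_of_not_sof A (fun n => - x n)); auto.
  - lra.
  - exists s. split; auto. split.
    + destruct hI as [_ [Hsub _]]. apply (Hsub A); auto. intros n Hsn. apply H2; auto.
    + replace r with (S0 + (r - S0)) by ring. auto.
Qed.
End Main.

Theorem mainTheorem8 (x : nat -> R) (S : R) (I : (nat -> Prop) -> Prop)
  (hI : is_ideal I) (hFin : forall A, finite_set A -> I A)
  (hconv : Un_cv (fun N => sum_f_R0 x N) S)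
  (hnabs : ~ (exists l, Un_cv (fun N => sum_f_R0 (fun n => Rabs (x n)) N) l)) :
  let C1 := forall A, I A -> sum_over_finite A (fun n => Rabs (x n)) in
  let C2 := exists A, I A /\ ~ sum_over_finite A (fun n => pos_part (x n))
                          /\ ~ sum_over_finite A (fun n => neg_part (x n)) in
  let C3 := (exists A, I A /\ ~ sum_over_finite A (fun n => pos_part (x n))) /\
            (forall A, I A -> ~ sum_over_finite A (fun n => pos_part (x n)) ->
                       sum_over_finite A (fun n => neg_part (x n))) in
  let C4 := (exists B, I B /\ ~ sum_over_finite B (fun n => neg_part (x n))) /\
            (forall B, I B -> ~ sum_over_finite B (fun n => neg_part (x n)) ->
                       sum_over_finite B (fun n => pos_part (x n))) in
  ((forall r, SR I x r <-> r = S) <-> C1) /\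
  (C2 -> forall r, SR I x r) /\
  (C3 -> forall r, r <= S -> SR I x r) /\
  (C4 -> forall r, S <= r -> SR I x r) /\
  ((C1 \/ C2 \/ C3 \/ C4) /\
   ~ (C1 /\ C2) /\ ~ (C1 /\ C3) /\ ~ (C1 /\ C4) /\
   ~ (C2 /\ C3) /\ ~ (C2 /\ C4) /\ ~ (C3 /\ C4)).
Proof.
  intros C1 C2 C3 C4.
  assert (Habs : forall A, ~ sum_over_finite A (fun n => Rabs (x n)) ->
     ~ sum_over_finite A (fun n => pos_part (x n)) \/ ~ sum_over_finite A (fun n => neg_part (x n))).
  { intros A Hn. apply NNPP. intros Hc. apply Hn. apply sof_abs; apply NNPP; intros H; apply Hc; auto. }
  split; [|split; [|split; [|split; [|split]]]].
  - split.
    + intros H A HA. apply NNPP. intros Hn. destruct (Habs A Hn) as [Hp|Hp].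
      * assert (SR I x (S - 1)) by (apply (SR_pos x S I hI hconv A); auto; lra).
        apply H in H0. lra.
      * assert (SR I x (S + 1)) by (apply (SR_neg x S I hI hconv A); auto; lra).
        apply H in H0. lra.
    + intros HC1 r. split.
      * intros [s [Hp [HIs Hcv]]]. pose proof (rearr_abs x S s (supp s) Hp (fun n H => H) (HC1 _ HIs) hconv).
        eapply UL_sequence; eauto.
      * intros ->. apply SR_S; auto.
  - intros [A [HA [Hp Hn]]] r. destruct (Rle_dec r S).
    + apply (SR_pos x S I hI hconv A); auto.
    + apply (SR_neg x S I hI hconv A); auto; lra.
  - intros [[A [HA Hp]] _] r Hr. apply (SR_pos x S I hI hconv A); auto.
  - intros [[A [HA Hp]] _] r Hr. apply (SR_neg x S I hI hconv A); auto.
  - destruct (classic C1) as [H1|H1]; [left; auto|right].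
    assert (HA : exists A, I A /\ ~ sum_over_finite A (fun n => Rabs (x n))).
    { apply NNPP. intros Hc. apply H1. intros A HA. apply NNPP. intros Hn. apply Hc. eauto. }
    destruct HA as [A [HA Hn]].
    destruct (classic C2) as [H2|H2]; [left; auto|right].
    destruct (Habs A Hn) as [Hp|Hp].
    + left. split; [eauto|]. intros A' HA' Hp'. apply NNPP. intros Hn'. apply H2. exists A'; auto.
    + right. split; [eauto|]. intros A' HA' Hp'. apply NNPP. intros Hn'. apply H2. exists A'; auto.
  - repeat split.
    + intros [H1 [A [HA [Hp _]]]]. apply Hp. apply sof_abs_pos. auto.
    + intros [H1 [[A [HA Hp]] _]]. apply Hp. apply sof_abs_pos. auto.
    + intros [H1 [[A [HA Hp]] _]]. apply Hp. apply sof_abs_neg. auto.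
    + intros [[A [HA [Hp Hn]]] [_ H3]]. apply Hn. auto.
    + intros [[A [HA [Hp Hn]]] [_ H4]]. apply Hp. auto.
    + intros [[[A [HA Hp]] H3] [[B [HB Hn]] _]].
      destruct hI as [Hun [Hsub _]].
      set (U := fun n => A n \/ B n).
      assert (HU : I U) by (apply Hun; auto).
      assert (HpU : ~ sum_over_finite U (fun n => pos_part (x n))).
      { intros Hc. apply Hp. eapply sof_mono; [|apply Hc]. intros n Hn'; left; auto. }
      apply Hn. eapply sof_mono; [|apply (H3 U HU HpU)]. intros n Hn'; right; auto.
Qed.
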